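(* Let $r$ be a positive integer and let $M\in\{0,1\}^{n\times n}$ with $\operatorname{rank}(M)\leq r$ and $p(M)\leq\frac{1}{8r}$. Then $z(M)\geq n/4$.
   Context: $p(M)=|M|/n^2$, where $|M|$ is the number of $1$ entries. $z(M)$ is the largest $z$ for which there exist $X,Y\subset[n]$ with $|X|=|Y|=z$ such that the submatrix $M[X\times Y]$ (rows $X$, columns $Y$) has only $0$ entries. *)

(* Defs.v *)
From HB Require Import structures.
From mathcomp Require Import all_boot all_order all_algebra.
Set Implicit Arguments. Unset Strict Implicit. Unset Printing Implicit Defensive.
Import Order.TTheory GRing.Theory Num.Theory.

(* A 0/1 matrix is represented as a boolean matrix; entry true = 1. *)

Definition ratmx (n : nat) (M : 'M[bool]_n) : 'M[rat]_n :=
  \matrix_(i, j) ((M i j)%:R)%R.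

Definition ones (n : nat) (M : 'M[bool]_n) : nat :=
  #|[set ij : 'I_n * 'I_n | M ij.1 ij.2]|.

Definition pM (n : nat) (M : 'M[bool]_n) : rat :=
  ((ones M)%:R / (n ^ 2)%:R)%R.

Definition zero_block (n : nat) (M : 'M[bool]_n) (X Y : {set 'I_n}) : bool :=
  [forall i in X, forall j in Y, ~~ M i j].

Definition zM (n : nat) (M : 'M[bool]_n) : nat :=
  \max_(XY : {set 'I_n} * {set 'I_n} |
          (#|XY.1| == #|XY.2|) && zero_block M XY.1 XY.2) #|XY.1|.

(* Main.v *)
Require Import Defs.
From HB Require Import structures.
From mathcomp Require Import all_boot all_order all_algebra.
Import Order.TTheory GRing.Theory Num.Theory.
From mathcomp Require Import zify.

Lemma subset_of_card (T : finType) (A : {set T}) k :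
  k <= #|A| -> exists B : {set T}, (B \subset A) && (#|B| == k).
Proof.
elim: k => [|k IH] Hk.
  by exists set0; rewrite sub0set cards0.
have [B /andP [sBA /eqP cB]] := IH (ltnW Hk).
have : 0 < #|A :\: B| by rewrite cardsD (setIidPr sBA) cB subn_gt0.
case/card_gt0P => x; rewrite inE => /andP [xB xA].
exists (x |: B); rewrite subUset sub1set xA sBA cardsU1 xB cB /=.
by rewrite add1n.
Qed.

Lemma card_bigcup_le (T : finType) m (S : 'I_m -> {set T}) :
  #|\bigcup_(k < m) S k| <= \sum_(k < m) #|S k|.
Proof.
elim/big_rec2: _ => [|k s U _ h]; first by rewrite cards0.
apply: leq_trans (leq_card_setU _ _) _; exact: leq_add.
Qed.

Lemma ones_sum n (M : 'M[bool]_n) :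
  ones M = \sum_(i < n) #|[set j | M i j]|.
Proof.
rewrite /ones -sum1dep_card.
under [RHS]eq_bigr do rewrite -sum1dep_card.
by rewrite pair_big_dep /=.
Qed.

Theorem lemma4p1 (n r : nat) (M : 'M[bool]_n) :
  (0 < r)%N ->
  (\rank (ratmx M) <= r)%N ->
  (pM M <= 1 / (8 * r)%:R)%R ->
  ((n%:R / 4 : rat) <= (zM M)%:R)%R.
Proof.
move=> r0 rk hp.
have [n0|n0] := posnP n.
  have -> : (n%:R : rat) = 0%R by rewrite n0.
  by rewrite mul0r ler0n.
rewrite /pM ler_pdivrMr ?ltr0n ?expn_gt0 ?n0 // in hp.
rewrite mul1r ler_pdivlMl ?ltr0n ?muln_gt0 // -natrM ler_nat in hp.
set c := fun i => #|[set j | M i j]|.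
set L := [set i : 'I_n | 4 * r * c i <= n].
have hL : n <= 4 * #|L|.
  have h1 : #|~:L| * n.+1 <= 4 * r * ones M.
    rewrite ones_sum big_distrr /=.
    apply: (@leq_trans (\sum_(i in ~:L) 4 * r * c i)).
      rewrite -sum_nat_const big_mkcond [leqRHS]big_mkcond /=; apply: leq_sum => i _; case: ifP => //; rewrite !inE -ltnNge; exact.
    rewrite big_mkcond /=; apply: leq_sum => i _.
    by case: ifP.
  have := cardsC L; rewrite card_ord => hc.
  nia.
pose A : 'M[rat]_n := (\matrix_(i, j) (if i \in L then ratmx M i j else 0))%R.
have rA : \rank A <= r.
  apply: leq_trans _ rk; apply: mxrankS; apply/row_subP => i.
  have -> : row i A = if i \in L then row i (ratmx M) else 0%R.
    by apply/rowP => j; rewrite !mxE; case: ifP; rewrite ?mxE.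
  by case: ifP; rewrite ?row_sub ?sub0mx.
pose f := maxrankfun A.
pose S k := [set j | A (f k) j != 0%R].
have hS : forall k, 4 * r * #|S k| <= n.
  move=> k; case: (boolP (f k \in L)) => fL.
    have sub : S k \subset [set j | M (f k) j].
      apply/subsetP => j; rewrite !inE mxE fL /ratmx mxE.
      by case: (M _ _); rewrite ?eqxx.
    apply: leq_trans (leq_mul (leqnn _) (subset_leq_card sub)) _.
    by rewrite inE in fL.
  have -> : #|S k| = 0.
    apply/eqP; rewrite cards_eq0; apply/eqP/setP => j.
    by rewrite !inE mxE (negbTE fL) eqxx.
  by rewrite muln0.
pose C := \bigcup_(k < \rank A) S k.
have hC : 4 * #|C| <= n.
  have h1 : 4 * r * #|C| <= \rank A * n.
    apply: (@leq_trans (4 * r * \sum_(k < \rank A) #|S k|)).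
      by rewrite leq_mul2l card_bigcup_le orbT.
    rewrite big_distrr /=.
    apply: (@leq_trans (\sum_(k < \rank A) n)).
      by apply: leq_sum => k _; exact: hS.
    by rewrite sum_nat_const card_ord.
  rewrite -(leq_pmul2l r0); nia.
have hz : forall i j, i \in L -> j \notin C -> ~~ M i j.
  move=> i j iL jC.
  have : (row i A <= rowsub f A)%MS by rewrite (eq_maxrowsub A) row_sub.
  case/submxP => D hD.
  have := congr1 (fun B : 'rV[rat]_n => B ord0 j) hD; rewrite !mxE iL.
  rewrite big1.
    by case: (M i j) => //= /eqP; rewrite oner_eq0.
  move=> k _; rewrite mxE.
  have : j \notin S k.
    apply: contra jC => h; apply/bigcupP; by exists k.
  by rewrite inE negbK => /eqP ->; rewrite mulr0.
pose Y := ~: C.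
have hY : n <= 4 * #|Y|.
  have := cardsC C; rewrite card_ord => hc; rewrite /Y; nia.
pose k := minn #|L| #|Y|.
have [X /andP [sX /eqP cX]] := @subset_of_card _ L k (geq_minl _ _).
have [Y' /andP [sY /eqP cY]] := @subset_of_card _ Y k (geq_minr _ _).
have hk : k <= zM M.
  have := @leq_bigmax_cond _ (fun XY : {set 'I_n} * {set 'I_n} =>
     (#|XY.1| == #|XY.2|) && zero_block M XY.1 XY.2) (fun XY => #|XY.1|) (X, Y').
  rewrite /= cX; apply.
  rewrite cY eqxx /=; apply/forallP => i; apply/implyP => iX.
  apply/forallP => j; apply/implyP => jY.
  apply: hz; first exact: (subsetP sX).
  have := (subsetP sY) j jY; by rewrite inE.
have hn : n <= 4 * zM M.
  have : n <= 4 * k by rewrite /k; nia.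
  move=> h; apply: leq_trans h _; by rewrite leq_mul2l hk orbT.
rewrite ler_pdivrMr // -natrM ler_nat; nia.
Qed.
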